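(* Let $E$ be a congruence on $\overline{\boldsymbol{T}(X_1,\ldots,X_n)}$. If $\overline{\boldsymbol{T}(X_1,\ldots,X_n)}/E$ is not a semifield over $\boldsymbol{T}$, then $\boldsymbol{V}(E)=\varnothing$.
   Context: $\boldsymbol{T}=\mathbb{R}\cup\{-\infty\}$ with $a\oplus b=\max\{a,b\}$, $a\odot b=a+b$. $\overline{\boldsymbol{T}(X_1,\ldots,X_n)}$ is the semifield of fractions of the tropical polynomial function semiring (tropical polynomials modulo equality as functions $\boldsymbol{T}^n\to\boldsymbol{T}$); each element defines a function $\mathbb{R}^n\to\boldsymbol{T}$. A congruence is an equivalence relation compatible with both operations; $\boldsymbol{V}(E)=\{x\in\mathbb{R}^n\mid f(x)=g(x)\ \forall(f,g)\in E\}$. A semifield is a commutative semiring with $0\ne1$ whose nonzero elements are invertible; a semifield $S_2$ is a semifield over the semifield $S_1$ via a semiring homomorphism $S_1\to S_2$ if this homomorphism is injective; here the homomorphism is $\boldsymbol{T}\to\overline{\boldsymbol{T}(X_1,\ldots,X_n)}/E$ sending a constant to its class. *)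

(* Defs.v *)
From HB Require Import structures.
From mathcomp Require Import all_boot all_order all_algebra.
From mathcomp Require Import reals.
Set Implicit Arguments. Unset Strict Implicit. Unset Printing Implicit Defensive.
Import Order.TTheory GRing.Theory Num.Theory.
Local Open Scope ring_scope.

Section Tropical.
Context {R : realType} {n : nat}.

(** The tropical semifield T = R ∪ {-oo}; [None] is -oo. *)
Definition trop := option R.

Definition tadd (a b : trop) : trop :=
  match a, b with
  | None, _ => b
  | _, None => a
  | Some x, Some y => Some (Num.max x y)
  end.

Definition tmul (a b : trop) : trop :=
  match a, b with
  | Some x, Some y => Some (x + y)
  | _, _ => None
  end.

(** tropical power a^{⊙k} (a^0 = 0 = tropical one, even for a = -oo) *)
Definition tpow (a : trop) (k : nat) : trop :=
  match k with
  | 0%N => Some 0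
  | _ => match a with Some x => Some (x *+ k) | None => None end
  end.

(** Formal tropical polynomials in X_1..X_n: finite lists of monomials
    c ⊙ X^a with c ∈ R (terms with coefficient -oo are omitted),
    the empty list being the zero polynomial -oo. *)
Definition tmonom := (R * ('I_n -> nat))%type.
Definition tpoly := seq tmonom.

Definition mon_eval (m : tmonom) (x : 'I_n -> trop) : trop :=
  tmul (Some m.1) (\big[tmul/Some 0]_(i < n) tpow (x i) (m.2 i)).

Definition peval (p : tpoly) (x : 'I_n -> trop) : trop :=
  foldr (fun m acc => tadd (mon_eval m x) acc) None p.

Definition padd (p q : tpoly) : tpoly := p ++ q.
Definition pmul (p q : tpoly) : tpoly :=
  [seq (m.1 + m'.1, fun i => (m.2 i + m'.2 i)%N) | m <- p, m' <- q].
Definition pconst (c : R) : tpoly := [:: (c, fun _ => 0%N)].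
Definition pone : tpoly := pconst 0.

Lemma size_pmul_gt0 (p q : tpoly) :
  (0 < size p)%N -> (0 < size q)%N -> (0 < size (pmul p q))%N.
Proof. by move=> hp hq; rewrite /pmul size_allpairs muln_gt0 hp hq. Qed.

(** Fractions f/g of tropical polynomials with g nonzero
    (a nonempty list of monomials with real coefficients is a nonzero function). *)
Record tfrac := TFrac { num : tpoly; den : tpoly; den_pos : (0 < size den)%N }.

(** Equality in the semifield of fractions of the tropical polynomial FUNCTION
    semiring: f/g = f'/g' iff f ⊙ g' = f' ⊙ g as functions T^n -> T. *)
Definition frac_eq (a b : tfrac) : Prop :=
  forall x : 'I_n -> trop,
    tmul (peval (num a) x) (peval (den b) x) = tmul (peval (num b) x) (peval (den a) x).

Definition fadd (a b : tfrac) : tfrac :=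
  TFrac (padd (pmul (num a) (den b)) (pmul (num b) (den a)))
       (size_pmul_gt0 (den_pos a) (den_pos b)).
Definition fmul (a b : tfrac) : tfrac :=
  TFrac (pmul (num a) (num b)) (size_pmul_gt0 (den_pos a) (den_pos b)).

Definition fzero : tfrac := @TFrac [::] pone isT.
Definition fone : tfrac := @TFrac pone pone isT.
Definition fconst (c : trop) : tfrac :=
  match c with None => fzero | Some r => @TFrac (pconst r) pone isT end.

Definition fval (a : tfrac) (x : 'I_n -> R) : trop :=
  match peval (den a) (fun i => Some (x i)) with
  | Some d => tmul (peval (num a) (fun i => Some (x i))) (Some (- d))
  | None => None
  end.

(** A congruence on the semifield of fractions, presented as a relation on
    representatives which contains the equality of fractions. *)
Definition is_congruence (E : tfrac -> tfrac -> Prop) : Prop :=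
  (forall a b, frac_eq a b -> E a b) /\
  (forall a, E a a) /\
  (forall a b, E a b -> E b a) /\
  (forall a b c, E a b -> E b c -> E a c) /\
  (forall a b c d, E a b -> E c d -> E (fadd a c) (fadd b d)) /\
  (forall a b c d, E a b -> E c d -> E (fmul a c) (fmul b d)).

(** The quotient by E is a semifield (0 <> 1, nonzero classes invertible)
    and the map T -> quotient, c |-> [c], is injective. *)
Definition quotient_semifield_over_T (E : tfrac -> tfrac -> Prop) : Prop :=
  [/\ ~ E fzero fone,
      (forall a, ~ E a fzero -> exists b, E (fmul a b) fone) &
      (forall c d : trop, E (fconst c) (fconst d) -> c = d)].

Definition in_V (E : tfrac -> tfrac -> Prop) (x : 'I_n -> R) : Prop :=
  forall a b, E a b -> fval a x = fval b x.

End Tropical.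

(* Main.v *)
Require Import Defs.
From mathcomp Require Import all_boot all_order all_algebra.
From mathcomp Require Import reals.
Set Implicit Arguments. Unset Strict Implicit. Unset Printing Implicit Defensive.
Import Order.TTheory GRing.Theory Num.Theory.
Local Open Scope ring_scope.

Section Aux.
Context {R : realType} {n : nat}.

Lemma tmulC (a b : @trop R) : tmul a b = tmul b a.
Proof. by case: a; case: b => //= x y; rewrite addrC. Qed.
Lemma tmulA (a b c : @trop R) : tmul a (tmul b c) = tmul (tmul a b) c.
Proof. by case: a; case: b; case: c => //= x y z; rewrite addrA. Qed.
Lemma tmul1 (a : @trop R) : tmul (Some 0) a = a.
Proof. by case: a => //= x; rewrite add0r. Qed.
Lemma tmul0r (a : @trop R) : tmul a None = None.
Proof. by case: a. Qed.
Lemma taddA (a b c : @trop R) : tadd a (tadd b c) = tadd (tadd a b) c.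
Proof. by case: a; case: b; case: c => //= x y z; rewrite maxA. Qed.
Lemma tmulDr (a b c : @trop R) : tmul a (tadd b c) = tadd (tmul a b) (tmul a c).
Proof.
by case: a; case: b; case: c => //= x y z; rewrite addr_maxr.
Qed.
Lemma tmulDl (a b c : @trop R) : tmul (tadd b c) a = tadd (tmul b a) (tmul c a).
Proof. by rewrite tmulC tmulDr !(tmulC a). Qed.

Lemma tpowD (a : @trop R) k l : tpow a (k + l) = tmul (tpow a k) (tpow a l).
Proof.
case: k => [|k]; first by rewrite add0n tmul1.
case: l => [|l]; first by rewrite addn0 tmulC tmul1.
by case: a => //= x; rewrite -mulrnDr.
Qed.

Lemma mon_evalM (m m' : @tmonom R n) y :
  mon_eval (m.1 + m'.1, fun i => (m.2 i + m'.2 i)%N) y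
  = tmul (mon_eval m y) (mon_eval m' y).
Proof.
rewrite /mon_eval /=.
have -> : \big[tmul/Some 0]_(i < n) tpow (y i) (m.2 i + m'.2 i)
   = tmul (\big[tmul/Some 0]_(i < n) tpow (y i) (m.2 i))
          (\big[tmul/Some 0]_(i < n) tpow (y i) (m'.2 i)).
  apply: (big_rec3 (fun a b c => a = tmul b c)); first by rewrite tmul1.
  move=> i y1 y2 y3 _ ->; rewrite tpowD.
  rewrite !tmulA; congr tmul; rewrite -!tmulA; congr tmul; exact: tmulC.
case: (\big[tmul/Some 0]_(i < n) tpow (y i) (m.2 i)) => [a|] //=.
case: (\big[tmul/Some 0]_(i < n) tpow (y i) (m'.2 i)) => [b|] //=.
by congr Some; rewrite -!addrA; congr (_ + _); rewrite addrCA.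
Qed.

Lemma peval_cat (p q : @tpoly R n) y : peval (p ++ q) y = tadd (peval p y) (peval q y).
Proof.
elim: p => [|m p IH] /=; first by [].
by rewrite IH taddA.
Qed.

Lemma peval_map (m : @tmonom R n) (q : tpoly) y :
  peval [seq (m.1 + m'.1, fun i => (m.2 i + m'.2 i)%N) | m' <- q] y
  = tmul (mon_eval m y) (peval q y).
Proof.
elim: q => [|m' q IH] /=; first by rewrite tmul0r.
by rewrite IH mon_evalM tmulDr.
Qed.

Lemma pevalM (p q : @tpoly R n) y : peval (pmul p q) y = tmul (peval p y) (peval q y).
Proof.
elim: p => [|m p IH] //=.
rewrite /pmul /= peval_cat peval_map -/(pmul p q) IH.
by rewrite tmulDl.
Qed.

Lemma big_some0 : \big[tmul/Some 0]_(i < n) (Some 0 : @trop R) = Some 0.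
Proof.
by apply: (big_ind (fun t => t = Some 0)) => // a b -> ->; rewrite /= addr0.
Qed.

Lemma fval_const (c : @trop R) (x : 'I_n -> R) : fval (fconst (n:=n) c) x = c.
Proof.
have Hc : forall r, peval (n:=n) (pconst r) (fun i => Some (x i)) = Some r.
  move=> r; rewrite /= /mon_eval /=.
  have -> : \big[tmul/Some 0]_(i < n) tpow (Some (x i)) 0 = Some 0 by exact: big_some0.
  by rewrite /= addr0.
case: c => [r|]; rewrite /fval; [change (den (fconst (Some r))) with (pone (R:=R) (n:=n)) | change (den (fconst None)) with (pone (R:=R) (n:=n))]; rewrite /pone Hc //.
change (num (fconst (Some r))) with (pconst (n:=n) r); rewrite Hc /=.
by rewrite oppr0 addr0.
Qed.

End Aux.

Theorem lemma3p7 (R : realType) (n : nat) (E : @tfrac R n -> @tfrac R n -> Prop) :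
  is_congruence E ->
  ~ quotient_semifield_over_T E ->
  forall x : 'I_n -> R, ~ in_V E x.
Proof.
move=> [Heq [Hrefl [Hsym [Htrans [Hadd Hmul]]]]] Hnot x Hx; apply: Hnot; split.
- move=> H; change fzero with (fconst (n:=n) (R:=R) None) in H.
  change fone with (fconst (n:=n) (R:=R) (Some 0)) in H.
  by have := Hx _ _ H; rewrite !fval_const.
- move=> a Ha.
  case Hna: (num a) => [|m p].
    exfalso; apply: Ha; apply: Heq => y; by rewrite /= Hna.
  have Hpos : (0 < size (num a))%N by rewrite Hna.
  exists (@TFrac R n (den a) (num a) Hpos); apply: Heq => y /=.
  by rewrite !pevalM tmulC (tmulC (peval (den a) y)).
- move=> c d H; have := Hx _ _ H; by rewrite !fval_const.
Qed.
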